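(* Let $\mathcal{H}=(\mathcal{V},\mathcal{E},\mu,\{w_e\})$ be a submodular hypergraph with $\mathcal{V}=[N]$, and let $\mathcal{G}$ be a directed graph with vertex set $\mathcal{V}_\mathcal{G}=\mathcal{V}\cup\bar{\mathcal{V}}$, where $\bar{\mathcal{V}}$ is a set of $M$ auxiliary vertices disjoint from $\mathcal{V}$, and nonnegative weighted adjacency matrix $\mathbf{A}$. Then the following two statements are equivalent: (i) $\mathrm{cut}_{\mathcal{H}}(\mathcal{S})=\min_{\mathcal{T}\subseteq\bar{\mathcal{V}}}\mathrm{cut}_{\mathcal{G}}(\mathcal{S}\cup\mathcal{T})$ for all $\mathcal{S}\subseteq\mathcal{V}$; (ii) $Q_1(\mathbf{x})=\min_{\bar{\mathbf{x}}\in\mathbb{R}^M}Q_1^{(g)}(\mathbf{y})$ for all $\mathbf{x}\in\mathbb{R}^N$, where $\mathbf{y}\in\mathbb{R}^{N+M}$ has $\mathbf{y}_{\mathcal{V}}=\mathbf{x}$ and $\mathbf{y}_{\bar{\mathcal{V}}}=\bar{\mathbf{x}}$.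
   Context: Lovász extension: for a set function $F:2^{[n]}\to\mathbb{R}$ with $F(\emptyset)=0$, and $\mathbf{x}\in\mathbb{R}^n$ with entries sorted as $x_{i_1}\ge\cdots\ge x_{i_n}$, $f(\mathbf{x})=\sum_{j=1}^{n-1}F(\{i_1,\dots,i_j\})(x_{i_j}-x_{i_{j+1}})+F([n])x_{i_n}$. A submodular hypergraph $\mathcal{H}=(\mathcal{V},\mathcal{E},\mu,\{w_e\})$ has vertex set $\mathcal{V}=[N]$, a set $\mathcal{E}$ of hyperedges $e\subseteq\mathcal{V}$, positive vertex weights $\mu$, and for each $e$ a splitting function $w_e:2^e\to\mathbb{R}_{\ge0}$ that is submodular, symmetric ($w_e(\mathcal{S})=w_e(e\setminus\mathcal{S})$) and satisfies $w_e(\emptyset)=0$; it is extended to $2^{\mathcal{V}}$ by $w_e(\mathcal{S})=w_e(\mathcal{S}\cap e)$. The hypergraph cut function is $\mathrm{cut}_{\mathcal{H}}(\mathcal{S})=\sum_{e\in\mathcal{E}}w_e(\mathcal{S})$, and $Q_1:\mathbb{R}^N\to\mathbb{R}$ is its Lovász extension (equivalently $Q_1(\mathbf{x})=\sum_{e}\vartheta_e f_e(\mathbf{x})$ with $\vartheta_e=\max_{\mathcal{S}\subseteq e}w_e(\mathcal{S})$ and $f_e$ the Lovász extension of $\vartheta_e^{-1}w_e$). For a directed graph with vertex set $\mathcal{V}_\mathcal{G}$ and nonnegative adjacency matrix $\mathbf{A}$ ($A_{uv}$ = weight of edge $u\to v$), $\mathrm{cut}_\mathcal{G}(\mathcal{S})=\sum_{u\in\mathcal{S},v\in\mathcal{V}_\mathcal{G}\setminus\mathcal{S}}A_{uv}$,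 and its Lovász extension is $Q_1^{(g)}(\mathbf{y})=\sum_{u,v\in\mathcal{V}_\mathcal{G}}A_{uv}\max\{y_u-y_v,0\}$. *)

(* Defs.v *)
From HB Require Import structures.
From mathcomp Require Import all_boot all_order all_algebra.
From mathcomp Require Import reals.
Set Implicit Arguments. Unset Strict Implicit. Unset Printing Implicit Defensive.
Import Order.TTheory GRing.Theory Num.Theory.
Local Open Scope ring_scope.

Section Defs.
Variable R : realType.

(* Lovász extension of F : 2^[n] -> R (F set0 = 0 is a hypothesis of use).
   s = indices sorted so that x_{s_0} >= x_{s_1} >= ... ; xs`_n = 0 so that
   the last term is F([n]) * x_{i_n}. *)
Definition lovasz (n : nat) (F : {set 'I_n} -> R) (x : 'I_n -> R) : R :=
  let s := sort (fun i j => x j <= x i) (enum 'I_n) in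
  let xs := map x s in
  \sum_(j < n) F [set i in take j.+1 s] * (xs`_j - xs`_j.+1).

Definition is_min (T : Type) (f : T -> R) (m : R) : Prop :=
  (exists t, f t = m) /\ (forall t, m <= f t).

Definition splitting_fun (N : nat) (e : {set 'I_N}) (w : {set 'I_N} -> R) : Prop :=
  [/\ w set0 = 0,
      (forall S : {set 'I_N}, S \subset e -> 0 <= w S),
      (forall S : {set 'I_N}, S \subset e -> w S = w (e :\: S)) &
      (forall S T : {set 'I_N}, S \subset e -> T \subset e ->
         w (S :|: T) + w (S :&: T) <= w S + w T)].

Definition cutH (N : nat) (Ed : {set {set 'I_N}})
  (w : {set 'I_N} -> {set 'I_N} -> R) (S : {set 'I_N}) : R :=
  \sum_(e in Ed) w e (S :&: e).

Definition Q1 (N : nat) (Ed : {set {set 'I_N}})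
  (w : {set 'I_N} -> {set 'I_N} -> R) (x : 'I_N -> R) : R :=
  lovasz (cutH Ed w) x.

(* directed graph on V ⊔ Vbar = 'I_N + 'I_M with adjacency A u v (u -> v) *)
Definition cutG (T : finType) (A : T -> T -> R) (S : {set T}) : R :=
  \sum_(u in S) \sum_(v in ~: S) A u v.

Definition Q1g (T : finType) (A : T -> T -> R) (y : T -> R) : R :=
  \sum_u \sum_v A u v * Num.max (y u - y v) 0.

Definition join_set (N M : nat) (S : {set 'I_N}) (T : {set 'I_M})
  : {set ('I_N + 'I_M)%type} :=
  [set inl i | i in S] :|: [set inr j | j in T].

Definition join_vec (N M : nat) (x : 'I_N -> R) (xb : 'I_M -> R)
  : ('I_N + 'I_M)%type -> R :=
  fun u => match u with inl i => x i | inr j => xb j end.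

End Defs.

(* Main.v *)
Require Import Defs.
From HB Require Import structures.
From mathcomp Require Import all_boot all_order all_algebra.
From mathcomp Require Import reals.
From mathcomp Require Import ring lra.
Import Order.TTheory GRing.Theory Num.Theory.
Set Implicit Arguments. Unset Strict Implicit. Unset Printing Implicit Defensive.
Local Open Scope ring_scope.

Section Lay.
Variable R : realType.

Fixpoint lay (f : R -> R) (v : seq R) : R :=
  match v with
  | a :: ((b :: _) as t) => f a * (a - b) + lay f t
  | _ => 0
  end.

Definition ind (b : bool) : R := (b : nat)%:R.

Lemma ind0 : ind false = 0. Proof. by []. Qed.
Lemma ind1 : ind true = 1. Proof. by []. Qed.

Definition sdec (v : seq R) := sorted (fun a b => b < a) v.

Lemma lay_cons2 f a b r : lay f [:: a, b & r] = f a * (a - b) + lay f (b :: r).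
Proof. by []. Qed.

Lemma sdec_tail a v : sdec (a :: v) -> sdec v.
Proof. by case: v => //= b r /andP[]. Qed.

Lemma sdec_lt a v : sdec (a :: v) -> forall t, t \in v -> t < a.
Proof.
move=> h t ht.
have := order_path_min (fun y x z (h1 : y < x) (h2 : z < y) => lt_trans h2 h1) h.
by move/allP/(_ t ht).
Qed.

Lemma lay_eq_in f g v : (forall t, t \in v -> f t = g t) -> lay f v = lay g v.
Proof.
elim: v => [|a [|b r] IH] // h.
rewrite !lay_cons2 h ?mem_head //; congr (_ + _); apply: IH => t ht.
by apply: h; rewrite inE ht orbT.
Qed.

Lemma lay_ext d f g v : sdec v -> (forall t, t \in v -> d <= t) ->
  (forall t, t \in v -> d < t -> f t = g t) -> lay f v = lay g v.
Proof.
elim: v => [|a [|b r] IH] // sv hd h.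
rewrite !lay_cons2.
have ab : b < a by move: sv => /= /andP[].
rewrite h ?mem_head //; last first.
  by apply: le_lt_trans ab; apply: hd; rewrite !inE eqxx orbT.
congr (_ + _); apply: IH.
- exact: sdec_tail sv.
- by move=> t ht; apply: hd; rewrite inE ht orbT.
- by move=> t ht; apply: h; rewrite inE ht orbT.
Qed.

Lemma lay_le f g v : sdec v -> (forall t, f t <= g t) -> lay f v <= lay g v.
Proof.
elim: v => [|a [|b r] IH] // sv h.
rewrite !lay_cons2.
have ab : b < a by move: sv => /= /andP[].
apply: lerD.
  by rewrite ler_wpM2r ?h // subr_ge0 ltW.
exact: IH (sdec_tail sv) h.
Qed.

Lemma lay_sum (I : Type) (rr : seq I) (P : pred I) (F : I -> R -> R) v :
  lay (fun t => \sum_(i <- rr | P i) F i t) v = \sum_(i <- rr | P i) lay (F i) v.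
Proof.
elim: v => [|a [|b r] IH]; first by rewrite big1.
  by rewrite big1.
by rewrite !lay_cons2 IH mulr_suml -big_split.
Qed.

Lemma lay_scale c f v : lay (fun t => c * f t) v = c * lay f v.
Proof.
elim: v => [|a [|b r] IH]; rewrite ?mulr0 //.
rewrite !lay_cons2 IH; ring.
Qed.

Lemma lay_sub f g v : lay (fun t => f t - g t) v = lay f v - lay g v.
Proof.
elim: v => [|a [|b r] IH]; rewrite ?subr0 //.
rewrite !lay_cons2 IH; ring.
Qed.

Lemma lay0 v : lay (fun _ => 0) v = 0.
Proof. elim: v => [|a [|b r] IH] //; by rewrite lay_cons2 IH mul0r add0r. Qed.

Lemma lay_phi v : sdec v -> exists L : R, forall a : R, a \in v ->
  lay (fun t : R => ind (t <= a)) v = a - L.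
Proof.
elim: v => [|a [|b r] IH] sv.
- by exists 0.
- by exists a => x; rewrite inE => /eqP ->; rewrite subrr.
have [L HL] := IH (sdec_tail sv).
exists L => x; rewrite inE => /orP[/eqP ->|hx].
  rewrite lay_cons2 lexx mul1r.
  rewrite (lay_eq_in (g := fun t => ind (t <= b))); last first.
    move=> t ht; rewrite (ltW (sdec_lt sv ht)).
    move: ht; rewrite inE => /orP[/eqP ->|ht]; first by rewrite lexx.
    by rewrite (ltW (sdec_lt (sdec_tail sv) ht)).
  rewrite HL ?mem_head //; ring.
have xa : x < a by apply: (sdec_lt sv).
by rewrite lay_cons2 HL // leNgt xa ind0 mul0r add0r.
Qed.

Lemma lay_pair v a b : sdec v -> a \in v -> b \in v ->
  lay (fun t => ind ((t <= a) && (b < t))) v = Num.max (a - b) 0.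
Proof.
move=> sv av bv.
have [L HL] := lay_phi sv.
case: (leP b a) => ba.
  rewrite (lay_eq_in (g := fun t => ind (t <= a) - ind (t <= b))); last first.
    move=> t _; case: (leP t b) => tb /=.
      by rewrite (le_trans tb ba) subrr.
    by rewrite subr0 andbT.
  rewrite lay_sub !HL //.
  have -> : Num.max (a - b) 0 = a - b by apply/max_idPl; rewrite subr_ge0.
  ring.
rewrite (lay_eq_in (g := fun _ => 0)); first rewrite lay0.
  by apply/esym/max_idPr; rewrite subr_le0 ltW.
move=> t _; case: (leP t a) => ta //=.
by rewrite ltNge (ltW (le_lt_trans ta ba)).
Qed.

Lemma grid_exists (l : seq R) : exists v, sdec v /\ forall t, (t \in v) = (t \in l).
Proof.
exists (rev (sort <=%O (undup l))); split.
  rewrite /sdec rev_sorted lt_sorted_uniq_le sort_uniq undup_uniq /=.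
  apply: sort_sorted; exact: le_total.
by move=> t; rewrite mem_rev mem_sort mem_undup.
Qed.



Lemma cutG_ind (T : finType) (A : T -> T -> R) (X : {set T}) :
  cutG A X = \sum_u \sum_w A u w * ind ((u \in X) && (w \notin X)).
Proof.
rewrite /cutG big_mkcond; apply: eq_bigr => u _.
case: (u \in X) => /=.
  rewrite big_mkcond; apply: eq_bigr => w _; rewrite inE.
  by case: (w \in X); rewrite /= ?ind0 ?ind1 ?mulr0 ?mulr1.
by rewrite big1 // => w _; rewrite ind0 mulr0.
Qed.

Lemma Q1g_lay (T : finType) (A : T -> T -> R) (y : T -> R) v :
  sdec v -> (forall u, y u \in v) ->
  Q1g A y = lay (fun t => cutG A [set u | t <= y u]) v.
Proof.
move=> sv yv.
transitivity (lay (fun t => \sum_u \sum_w A u w * ind ((t <= y u) && (y w < t))) v).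
  rewrite lay_sum /Q1g; apply: eq_bigr => u _; rewrite lay_sum.
  by apply: eq_bigr => w _; rewrite lay_scale lay_pair.
apply: lay_eq_in => t _; rewrite cutG_ind; apply: eq_bigr => u _.
by apply: eq_bigr => w _; rewrite !inE -ltNge.
Qed.

Lemma tele (u : nat -> R) m : \sum_(j < m) (u j - u j.+1) = u 0%N - u m.
Proof.
elim: m => [|m IH]; first by rewrite big_ord0 subrr.
rewrite big_ord_recr /= IH; ring.
Qed.

Lemma cross_sum (a : seq R) t m :
  (forall p q, (p <= q)%N -> (q < m)%N -> a`_q <= a`_p) ->
  (0 < m)%N -> t <= a`_0 -> a`_(m.-1) < t ->
  \sum_(j < m) ind [&& (j.+1 < m)%N, t <= a`_j & a`_j.+1 < t] = 1.
Proof.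
case: m => [//|m] mono _ h0 hm /=.
rewrite big_ord_recr /= ltnn /= ind0 addr0.
transitivity (\sum_(j < m) (ind (t <= a`_j) - ind (t <= a`_j.+1))).
  apply: eq_bigr => j _.
  have hj : (j.+1 < m.+1)%N by rewrite ltnS.
  rewrite hj /=.
  case: (leP t a`_j.+1) => h1.
    by rewrite (le_trans h1 (mono _ _ (leqnSn _) hj)) subrr.
  by rewrite andbT ind0 subr0.
have /= -> := tele (fun j => ind (t <= a`_j)) m.
by rewrite h0 leNgt hm ind1 ind0 subr0.
Qed.

Lemma lovasz_lay n (F : {set 'I_n} -> R) (x : 'I_n -> R) v :
  F set0 = 0 -> F setT = 0 -> sdec v -> (forall i, x i \in v) ->
  lovasz F x = lay (fun t => F [set i | t <= x i]) v.
Proof.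
move=> F0 FT sv xv.
rewrite /lovasz /=.
set s := sort _ _; set a := map x s.
have size_s : size s = n by rewrite size_sort size_enum_ord.
have mem_s : forall i, i \in s by move=> i; rewrite mem_sort mem_enum.
have sorted_a : sorted (fun p q => q <= p) a.
  rewrite sorted_map; apply: sort_sorted => i j /=; exact: le_total.
have mono : forall p q, (p <= q)%N -> (q < n)%N -> a`_q <= a`_p.
  move=> p q pq qn.
  have tr : transitive (fun p q : R => q <= p).
    by move=> y1 x1 z1 h1 h2; apply: le_trans h2 h1.
  apply: (sorted_leq_nth tr (fun r => lexx r) 0 sorted_a) => //;
    rewrite inE size_map size_s //; exact: leq_ltn_trans qn.
have aval : forall i, x i = a`_(index i s) /\ (index i s < n)%N.
  move=> i; have il : (index i s < size s)%N by rewrite index_mem.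
  split; last by move: il; rewrite size_s.
  by rewrite /a (nth_map i) // nth_index.
have ain : forall j, (j < n)%N -> a`_j \in v.
  move=> j jn; have : a`_j \in a by rewrite mem_nth // size_map size_s.
  by move/mapP=> [i _ ->].
transitivity (\sum_(j < n) F [set i in take j.+1 s] *
   lay (fun t => ind [&& (j.+1 < n)%N, t <= a`_j & a`_j.+1 < t]) v).
  apply: eq_bigr => j _; case: (ltnP j.+1 n) => hj.
    rewrite (lay_eq_in (g := fun t => ind ((t <= a`_j) && (a`_j.+1 < t)))); last first.
      by [].
    have aj : a`_j \in v by apply: ain.
    have aj1 : a`_j.+1 \in v by apply: ain.
    rewrite lay_pair //.
    congr (_ * _); apply/esym/max_idPl; rewrite subr_ge0; exact: mono.
  have -> : [set i in take j.+1 s] = setT.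
    apply/setP => i; rewrite !inE take_oversize ?mem_s // size_s //.
  by rewrite FT !mul0r.
under eq_bigr => j _ do rewrite -lay_scale.
rewrite -(lay_sum (index_enum 'I_n) xpredT
   (fun (j : 'I_n) t => F [set i in take j.+1 s] * ind [&& (j.+1 < n)%N, t <= a`_j & a`_j.+1 < t])).
apply: lay_eq_in => t _.
rewrite (eq_bigr (fun j : 'I_n => F [set i | t <= x i] * ind [&& (j.+1 < n)%N, t <= a`_j & a`_j.+1 < t])); last first.
  move=> j _.
  case hj: [&& (j.+1 < n)%N, t <= a`_j & a`_j.+1 < t]; last by rewrite ind0 !mulr0.
  move/and3P: hj => [h1 h2 h3]; congr (F _ * _); apply/setP => i; rewrite !inE.
  rewrite in_take ?mem_s //; have [-> il] := aval i.
  apply/idP/idP.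
    move=> hl; apply: le_trans h2 (mono _ _ _ _) => //; exact: ltnW.
  move=> ht; rewrite ltnS leqNgt; apply/negP => hl.
  by have := le_lt_trans (le_trans ht (mono _ _ hl il)) h3; rewrite ltxx.
rewrite -mulr_sumr.
have [allge|] := boolP [forall i, t <= x i].
  have -> : [set i | t <= x i] = setT by apply/setP => i; rewrite !inE (forallP allge i).
  by rewrite FT mul0r.
move/forallPn => [i1]; rewrite -ltNge => hi1.
have [allgt|] := boolP [forall i, x i < t].
  have -> : [set i | t <= x i] = set0.
    by apply/setP => i; rewrite !inE leNgt (forallP allgt i).
  by rewrite F0 mul0r.
move/forallPn => [i2]; rewrite -leNgt => hi2.
have n0 : (0 < n)%N by apply: leq_ltn_trans (ltn_ord i1).
rewrite (cross_sum mono n0) ?mulr1 //.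
  have [xe il] := aval i2; apply: le_trans hi2 _; rewrite xe; exact: mono.
have [xe il] := aval i1; apply: le_lt_trans hi1; rewrite xe; apply: mono.
  by rewrite -ltnS prednK.
by rewrite prednK // leqnn.
Qed.

End Lay.

Section Main.
Variable R : realType.
Variables N M : nat.
Local Notation V := ('I_N + 'I_M)%type.

Lemma join_inl (S : {set 'I_N}) (T : {set 'I_M}) i :
  (inl i \in join_set S T) = (i \in S).
Proof.
rewrite /join_set inE mem_imset; last by move=> a b [].
by case: imsetP => [[j _ h]|_]; [discriminate h | rewrite orbF].
Qed.

Lemma join_inr (S : {set 'I_N}) (T : {set 'I_M}) j :
  (inr j \in join_set S T) = (j \in T).
Proof.
rewrite /join_set inE [inr j \in _ @: T]mem_imset; last by move=> a b [].
by case: imsetP => [[k _ h]|_]; [discriminate h | ].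
Qed.

Lemma join_ext (X : {set V}) (S : {set 'I_N}) (T : {set 'I_M}) :
  (forall i, (inl i \in X) = (i \in S)) -> (forall j, (inr j \in X) = (j \in T)) ->
  X = join_set S T.
Proof.
move=> hl hr; apply/setP => -[i|j]; by rewrite ?join_inl ?join_inr.
Qed.

Lemma join_level (x : 'I_N -> R) (xb : 'I_M -> R) t :
  [set u | t <= join_vec x xb u] = join_set [set i | t <= x i] [set j | t <= xb j].
Proof. by apply: join_ext => ?; rewrite !inE. Qed.

Lemma join_setI (S S' : {set 'I_N}) (T T' : {set 'I_M}) :
  join_set S T :&: join_set S' T' = join_set (S :&: S') (T :&: T').
Proof. apply: join_ext => ?; by rewrite !in_setI ?join_inl ?join_inr. Qed.

Lemma join_setU (S S' : {set 'I_N}) (T T' : {set 'I_M}) :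
  join_set S T :|: join_set S' T' = join_set (S :|: S') (T :|: T').
Proof. by apply: join_ext => ?; rewrite in_setU ?join_inl ?join_inr in_setU. Qed.

Lemma cutG_ge0 (A : V -> V -> R) X : (forall u v, 0 <= A u v) -> 0 <= cutG A X.
Proof. by move=> hA; apply: sumr_ge0 => u _; apply: sumr_ge0. Qed.

Lemma cutG_sub (A : V -> V -> R) X Y : (forall u v, 0 <= A u v) ->
  cutG A (X :&: Y) + cutG A (X :|: Y) <= cutG A X + cutG A Y.
Proof.
move=> hA; rewrite !cutG_ind -!big_split; apply: ler_sum => u _.
rewrite -!big_split; apply: ler_sum => w _ /=.
rewrite -!mulrDr ler_wpM2l // !inE.
by case: (u \in X); case: (u \in Y); case: (w \in X); case: (w \in Y);
  rewrite /= ?ind0 ?ind1; lra.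
Qed.

End Main.

Theorem theorem1 (R : realType) (N M : nat)
  (Ed : {set {set 'I_N}}) (mu : 'I_N -> R)
  (w : {set 'I_N} -> {set 'I_N} -> R)
  (A : ('I_N + 'I_M)%type -> ('I_N + 'I_M)%type -> R) :
  (forall i, 0 < mu i) ->
  (forall e, e \in Ed -> splitting_fun e (w e)) ->
  (forall u v, 0 <= A u v) ->
  (forall S : {set 'I_N},
     is_min (fun T : {set 'I_M} => cutG A (join_set S T)) (cutH Ed w S))
  <->
  (forall x : 'I_N -> R,
     is_min (fun xb : 'I_M -> R => Q1g A (join_vec x xb)) (Q1 Ed w x)).
Proof.
move=> _ hw hA.
have cutH0 : cutH Ed w set0 = 0.
  rewrite /cutH big1 // => e he; rewrite set0I; by case: (hw e he).
have cutHT : cutH Ed w setT = 0.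
  rewrite /cutH big1 // => e he; rewrite setTI.
  case: (hw e he) => h0 _ hs _; by rewrite hs ?subxx // setDv.
have Q1_lay : forall x v, sdec v -> (forall i, x i \in v) ->
    Q1 Ed w x = lay (fun t => cutH Ed w [set i | t <= x i]) v.
  by move=> x v sv xv; apply: lovasz_lay.
split.
- move=> hi x.
  have min_ge : forall S T, cutH Ed w S <= cutG A (join_set S T).
    by move=> S T; case: (hi S) => _ ->.
  have lb : forall xb, Q1 Ed w x <= Q1g A (join_vec x xb).
    move=> xb.
    have [v [sv hv]] := grid_exists (codom (join_vec x xb)).
    have yv : forall u, join_vec x xb u \in v by move=> u; rewrite hv codom_f.
    rewrite (Q1g_lay A sv yv) (Q1_lay x v sv); last by move=> i; exact: (yv (inl i)).
    apply: lay_le sv _ => t; rewrite join_level; exact: min_ge.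
  split; last exact: lb.
  case: (pickP (@predT 'I_N)) => [i0 _ | hN]; last first.
    exists (fun _ => 0).
    have sv0 : sdec [:: (0 : R)] by [].
    rewrite (Q1_lay x [::]) //; last by move=> i; have := hN i.
    rewrite (Q1g_lay A sv0) //.
    by case=> [i|j] /=; [have := hN i | rewrite inE].
  pose ismin (S : {set 'I_N}) (T : {set 'I_M}) := cutG A (join_set S T) == cutH Ed w S.
  have min_ex : forall S, exists T, ismin S T.
    by move=> S; case: (hi S) => -[T hT] _; exists T; apply/eqP.
  have uni : forall (S S' : {set 'I_N}) (T T' : {set 'I_M}), S \subset S' -> ismin S T -> ismin S' T' ->
      ismin S' (T :|: T').
    move=> S S' T T' sS /eqP hT /eqP hT'.
    have := cutG_sub (join_set S T) (join_set S' T') hA.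
    rewrite join_setI join_setU hT hT' (setIidPl sS) (setUidPr sS).
    have := min_ge S (T :&: T'); have := min_ge S' (T :|: T') => h1 h2 h3.
    apply/eqP/le_anti; rewrite h1 andbT; lra.
  pose Tmax (S : {set 'I_N}) := \bigcup_(T | ismin S T) T.
  have Tmax_min : forall S, ismin S (Tmax S).
    move=> S; have [T0 h0] := min_ex S.
    suff : ismin S (T0 :|: Tmax S).
      by rewrite (setUidPr _) //; apply: (bigcup_sup T0).
    rewrite /Tmax; apply: (big_ind (fun X => ismin S (T0 :|: X))).
    - by rewrite setU0.
    - move=> X Y hX hY; have := uni _ _ _ _ (subxx S) hX hY.
      by rewrite setUACA setUid.
    - by move=> T hT; apply: uni (subxx S) h0 hT.
  have Tmax_mono : forall S S' : {set 'I_N}, S \subset S' -> Tmax S \subset Tmax S'.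
    move=> S S' sS.
    apply: subset_trans (subsetUl (Tmax S) (Tmax S')) _.
    exact: (bigcup_sup _ (uni _ _ _ _ sS (Tmax_min S) (Tmax_min S'))).
  have [im hd] : exists im, forall i, x im <= x i.
    case: (@arg_minP _ _ _ i0 xpredT x isT) => im _ h; by exists im => i; apply: h.
  pose d := x im.
  pose xb j := \big[Num.max/d]_(i | j \in Tmax [set k | x i <= x k]) x i.
  have [v [sv hv]] := grid_exists (codom x).
  have xv : forall i, x i \in v by move=> i; rewrite hv codom_f.
  have xbval : forall j, exists i, xb j = x i.
    move=> j; rewrite /xb; apply: (big_ind (fun z => exists i, z = x i)).
    - by exists im.
    - move=> a b [i1 ->] [i2 ->]; case: (leP (x i1) (x i2)) => h.
        by exists i2.
      by exists i1.
    - by move=> i _; exists i.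
  have yv : forall u, join_vec x xb u \in v.
    by case=> [i|j] /=; [| have [i ->] := xbval j].
  have dv : forall t, t \in v -> d <= t by move=> t; rewrite hv => /codomP [i ->].
  have lev : forall t, t \in v -> d < t -> [set j | t <= xb j] = Tmax [set i | t <= x i].
    move=> t; rewrite hv => /codomP [i' ->] dt.
    apply/setP => j; rewrite inE; apply/idP/idP => hj.
      apply/negPn/negP => hn.
      have : xb j < x i'.
        rewrite /xb; apply: (big_ind (fun z => z < x i')) => //.
          by move=> a b ha hb; rewrite gt_max ha hb.
        move=> i hI; rewrite ltNge; apply/negP => hii; apply: (negP hn).
        apply: (subsetP (Tmax_mono _ _ _)) hI.
        by apply/subsetP => k; rewrite !inE => hk; exact: le_trans hii hk.
      by rewrite ltNge hj.
    rewrite /xb; exact: (le_bigmax_cond d (P := fun i => j \in Tmax [set k | x i <= x k]) x hj).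
  exists xb.
  rewrite (Q1g_lay A sv yv) (Q1_lay x v sv xv).
  apply: (lay_ext (d := d)) sv dv _ => t tv dt.
  by rewrite join_level (lev t tv dt); exact/eqP/Tmax_min.
- move=> hii S.
  pose x := fun i : 'I_N => if i \in S then 1 else 0 : R.
  have sv10 : sdec [:: (1 : R); 0] by rewrite /sdec /= andbT ltr01.
  have x10 : forall i, x i \in [:: (1 : R); 0].
    by move=> i; rewrite /x; case: (i \in S); rewrite !inE eqxx ?orbT.
  have Sx : [set i | 1 <= x i] = S.
    by apply/setP => i; rewrite !inE /x; case: (i \in S); rewrite ?lexx // ler10.
  have Q1x : Q1 Ed w x = cutH Ed w S.
    by rewrite (Q1_lay x _ sv10 x10) lay_cons2 Sx subr0 mulr1 /= addr0.
  have Q1gT : forall T : {set 'I_M}, Q1g A (join_vec x (fun j => if j \in T then 1 else 0))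
      = cutG A (join_set S T).
    move=> T; rewrite (Q1g_lay A sv10); last first.
      case=> [i|j] /=; first exact: x10.
      by case: (j \in T); rewrite !inE eqxx ?orbT.
    rewrite lay_cons2 join_level Sx subr0 mulr1 /= addr0.
    congr (cutG A (join_set S _)); apply/setP => j; rewrite !inE.
    by case: (j \in T); rewrite ?lexx // ler10.
  have [[xb hex] hle] := hii x; rewrite Q1x in hex hle.
  have ge : forall T : {set 'I_M}, cutH Ed w S <= cutG A (join_set S T).
    by move=> T; rewrite -Q1gT; exact: hle.
  pose Ts := [arg min_(T < set0) cutG A (join_set S T)]%O.
  have hTs : forall T : {set 'I_M}, cutG A (join_set S Ts) <= cutG A (join_set S T).
    rewrite /Ts; case: (@arg_minP _ _ _ set0 xpredT (fun T => cutG A (join_set S T)) isT).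
    by move=> T0 _ h T; exact: h.
  split; last exact: ge.
  exists Ts; apply: le_anti; rewrite ge andbT -hex.
  have [v [sv hv]] := grid_exists (1 :: 0 :: codom (join_vec x xb)).
  have yv : forall u, join_vec x xb u \in v.
    by move=> u; rewrite hv !inE codom_f !orbT.
  have v1 : 1 \in v by rewrite hv mem_head.
  have v0 : 0 \in v by rewrite hv !inE eqxx orbT.
  rewrite (Q1g_lay A sv yv).
  apply: le_trans (lay_le (f := fun t => cutG A (join_set S Ts) * ind R ((t <= 1) && (0 < t))) sv _).
    rewrite lay_scale lay_pair // subr0.
    by rewrite (max_idPl (@ler01 R)) mulr1.
  move=> t; case: (leP t 1) => t1; case: (ltP 0 t) => t0 /=;
    rewrite ?ind0 ?ind1 ?mulr0 ?mulr1 ?cutG_ge0 //.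
  rewrite join_level.
  have -> : [set i | t <= x i] = S.
    apply/setP => i; rewrite !inE /x; case: (i \in S) => //.
    by rewrite leNgt t0.
  exact: hTs.
Qed.
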